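(* Let $\gamma: I \to M$ be a unit speed curve on a smooth oriented surface $M\subset E^3$ with Darboux frame $\{T,V,U\}$, nowhere-vanishing normal curvature $k_n$, geodesic curvature $k_g$ and geodesic torsion $\tau_g$, and suppose the position vector of $\gamma$ always lies in the plane spanned by $\{T, V\}$, i.e. $\gamma(s) = \mu_1(s)T(s) + \mu_2(s)V(s)$ for differentiable functions $\mu_1,\mu_2$. Then $\gamma$ is an isophotic curve if and only if the function $$s\mapsto \frac{k_n^2}{(k_n^2+\tau_g^2)^{3/2}}\, e^{-\int \frac{\tau_g k_g}{k_n}\, ds}$$ is constant.
   Context: For a unit speed curve $\gamma$ on an oriented surface $M\subset E^3$, the Darboux frame is $T=\gamma'$, $U$ = unit normal of $M$ along $\gamma$, $V = U\times T$, satisfying $T' = k_g V + k_n U$, $V' = -k_g T + \tau_g U$, $U' = -k_n T - \tau_g V$; here $k_g$, $k_n$, $\tau_g$ are the geodesic curvature, normal curvature and geodesic torsion. The curve $\gamma$ is an isophotic curve if there is a fixed unit vector $d$ and a constant angle $\phi$ with $\langle U, d\rangle = \cos\phi$ along $\gamma$. $\int\cdot\,ds$ denotes an antiderivative. *)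

(* Defs.v *)
From Stdlib Require Import Reals.
From Coquelicot Require Import Coquelicot.
Open Scope R_scope.

Definition vec3 : Type := (R * R * R)%type.
Definition vx (v : vec3) : R := fst (fst v).
Definition vy (v : vec3) : R := snd (fst v).
Definition vz (v : vec3) : R := snd v.
Definition mkv (x y z : R) : vec3 := (x, y, z).

Definition vadd (u v : vec3) : vec3 := mkv (vx u + vx v) (vy u + vy v) (vz u + vz v).
Definition vscale (c : R) (v : vec3) : vec3 := mkv (c * vx v) (c * vy v) (c * vz v).
Definition dot (u v : vec3) : R := vx u * vx v + vy u * vy v + vz u * vz v.
Definition cross (u v : vec3) : vec3 :=
  mkv (vy u * vz v - vz u * vy v)
      (vz u * vx v - vx u * vz v)
      (vx u * vy v - vy u * vx v).

Definition vderiv (f : R -> vec3) (s : R) (f' : vec3) : Prop :=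
  is_derive (fun t => vx (f t)) s (vx f') /\
  is_derive (fun t => vy (f t)) s (vy f') /\
  is_derive (fun t => vz (f t)) s (vz f').

Definition inI (a b : Rbar) (s : R) : Prop := Rbar_lt a s /\ Rbar_lt s b.

Definition isophotic (a b : Rbar) (U : R -> vec3) : Prop :=
  exists (d : vec3) (phi : R), dot d d = 1 /\
    forall s, inI a b s -> dot (U s) d = cos phi.

(* Main.v *)
Require Import Defs.
From Stdlib Require Import Reals Lra Psatz Classical.
From Coquelicot Require Import Coquelicot.
Open Scope R_scope.

Lemma loc_I a b x : inI a b x -> locally x (inI a b).
Proof.
  intros H. apply (locally_open (inI a b)); auto.
  unfold inI. apply open_and; [apply open_Rbar_gt|apply open_Rbar_lt].
Qed.

Lemma deriv_zero_on a b (f : R -> R) k x l :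
  (forall t, inI a b t -> f t = k) -> inI a b x -> is_derive f x l -> l = 0.
Proof.
  intros Hf Hx Hd.
  assert (H0 : is_derive f x 0).
  { apply (is_derive_ext_loc (fun _ => k)). 
    - apply (filter_imp (inI a b)); [|apply loc_I; auto]. intros t Ht; symmetry; auto.
    - exact (@is_derive_const R_AbsRing R_NormedModule k x). }
  apply is_derive_unique in Hd. apply is_derive_unique in H0. congruence.
Qed.

Lemma inI_between a b x y z : inI a b x -> inI a b y -> Rmin x y <= z <= Rmax x y -> inI a b z.
Proof.
  unfold inI; intros [H1 H2] [H3 H4] [H5 H6].
  destruct (Rle_dec x y) as [Hl|Hl].
  - rewrite Rmin_left in H5 by lra. rewrite Rmax_right in H6 by lra.
    split; destruct a, b; simpl in *; try lra; auto.
  - rewrite Rmin_right in H5 by lra. rewrite Rmax_left in H6 by lra.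
    split; destruct a, b; simpl in *; try lra; auto.
Qed.

Lemma const_on a b (f : R -> R) x y :
  (forall t, inI a b t -> is_derive f t 0) -> inI a b x -> inI a b y -> f x = f y.
Proof.
  intros Hd Hx Hy.
  destruct (MVT_gen f x y (fun _ => 0)) as [c [_ Hc]].
  - intros z Hz. apply Hd. apply (inI_between a b x y); auto; lra.
  - intros z Hz. apply continuity_pt_filterlim. apply (@ex_derive_continuous R_AbsRing R_NormedModule).
    eexists. apply Hd. apply (inI_between a b x y); auto.
  - lra.
Qed.

Lemma is_derive_eq (f : R -> R) (x l l' : R) : is_derive f x l -> @eq R l l' -> is_derive f x l'.
Proof. intros H ->; exact H. Qed.

Lemma dplus (f g : R -> R) x df dg : is_derive f x df -> is_derive g x dg -> is_derive (fun t => f t + g t) x (df + dg).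
Proof. intros; apply (@is_derive_plus R_AbsRing R_NormedModule); auto. Qed.
Lemma dmult (f g : R -> R) x df dg : is_derive f x df -> is_derive g x dg -> is_derive (fun t => f t * g t) x (df * g x + f x * dg).
Proof. intros; apply (@is_derive_mult R_AbsRing); auto. intros; apply Rmult_comm. Qed.

Lemma dot_deriv (f g : R -> vec3) s f' g' : vderiv f s f' -> vderiv g s g' ->
  is_derive (fun t => dot (f t) (g t)) s (dot f' (g s) + dot (f s) g').
Proof.
  intros [H1 [H2 H3]] [G1 [G2 G3]]. unfold dot.
  eapply is_derive_eq.
  - apply dplus; [apply dplus|];
      apply (dmult (fun t => _ (f t)) (fun t => _ (g t))); eauto.
  - match goal with |- ?x = ?y => change (@eq R x y) end; ring.
Qed.

Lemma cont_ball (f : R -> R) x e : continuity_pt f x -> 0 < e ->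
  locally x (fun t => Rabs (f t - f x) < e).
Proof.
  intros Hc He. apply continuity_pt_filterlim in Hc.
  apply (Hc (fun y => Rabs (y - f x) < e)).
  apply (locally_ball (f x) (mkposreal e He)).
Qed.

Lemma sign_deriv (f g : R -> R) x g' : continuity_pt f x -> is_derive g x g' -> g x <> 0 ->
  locally x (fun t => f t ^ 2 = g t ^ 2) -> is_derive f x (f x / g x * g').
Proof.
  intros Hf Hg Hgx Hl.
  assert (Hx : f x ^ 2 = g x ^ 2) by (apply locally_singleton in Hl; exact Hl).
  assert (Hfx : f x <> 0) by (intro E; rewrite E in Hx; apply Hgx; nra).
  assert (Hgc : continuity_pt g x).
  { apply continuity_pt_filterlim. apply (@ex_derive_continuous R_AbsRing R_NormedModule). eexists; eauto. }
  apply (is_derive_ext_loc (fun t => f x / g x * g t)).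
  - generalize (filter_and _ _ Hl (filter_and _ _ (cont_ball f x (Rabs (f x)) Hf (Rabs_pos_lt _ Hfx))
        (cont_ball g x (Rabs (g x)) Hgc (Rabs_pos_lt _ Hgx)))).
    apply filter_imp. intros t [E [Ef Eg]].
    match goal with |- ?x = ?y => change (@eq R x y) end.
    assert (K : f t * g x = f x * g t).
    { assert (A1 : f t = g t \/ f t = - g t).
      { assert ((f t - g t) * (f t + g t) = 0) by nra.
        destruct (Rmult_integral _ _ H) as [H'|H']; [left|right]; lra. }
      assert (A2 : f x = g x \/ f x = - g x).
      { assert ((f x - g x) * (f x + g x) = 0) by nra.
        destruct (Rmult_integral _ _ H) as [H'|H']; [left|right]; lra. }
      revert Ef Eg; unfold Rabs; repeat destruct Rcase_abs; intros;
      destruct A1 as [A1|A1]; destruct A2 as [A2|A2]; rewrite A1, A2 in *; nra. }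
    field_simplify_eq; auto. lra.
  - apply is_derive_scal; auto.
Qed.
Lemma dexpneg A s l: is_derive A s l -> is_derive (fun t => exp (- A t)) s (- l * exp (- A s)).
Proof. intros H. auto_derive. - eexists; eauto. - replace (Derive (fun x : R => A x) s) with l by (symmetry; apply is_derive_unique; exact H); ring. Qed.
Lemma dg (m q : R -> R) s dm dq k : is_derive m s dm -> is_derive q s dq -> 0 < m s ^2 + q s ^2 ->
  is_derive (fun t => k / sqrt (m t ^2 + q t ^2)) s (- k * (m s * dm + q s * dq) / ((m s ^2 + q s ^2) * sqrt (m s ^2 + q s ^2))).
Proof. intros H1 H2 H3. auto_derive.
 - repeat split; try (eexists; eauto). lra.
 - assert (0 < sqrt (m s ^2 + q s ^2)) by (apply sqrt_lt_R0; lra).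
   replace (m s * (m s * 1) + q s * (q s * 1)) with (m s ^2 + q s ^2) by ring. lra.
 - replace (Derive (fun x : R => m x) s) with dm by (symmetry; apply is_derive_unique; exact H1).
   replace (Derive (fun x : R => q x) s) with dq by (symmetry; apply is_derive_unique; exact H2).
   assert (0 < sqrt (m s ^2 + q s ^2)) by (apply sqrt_lt_R0; lra).
   replace (m s * (m s * 1) + q s * (q s * 1)) with (m s ^2 + q s ^2) by ring.
   rewrite sqrt_sqrt by lra. field. lra.
Qed.

Lemma cross_dot_l u t : dot (cross u t) u = 0.
Proof. unfold dot, cross, mkv, vx, vy, vz; simpl; ring. Qed.
Lemma cross_dot_r u t : dot (cross u t) t = 0.
Proof. unfold dot, cross, mkv, vx, vy, vz; simpl; ring. Qed.
Lemma cross_norm u t : dot (cross u t) (cross u t) = dot u u * dot t t - (dot u t)^2.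
Proof. unfold dot, cross, mkv, vx, vy, vz; simpl; ring. Qed.
Lemma gram d u t : (dot d (cross u t))^2 = dot d d * dot u u * dot t t
  + 2 * dot d u * dot u t * dot t d - dot d d * (dot u t)^2 - dot u u * (dot d t)^2
  - dot t t * (dot d u)^2.
Proof. unfold dot, cross, mkv, vx, vy, vz; simpl; ring. Qed.
Lemma dot_sym u v : dot u v = dot v u.
Proof. unfold dot; ring. Qed.
Lemma dot_comb x y z a b c w : dot (vadd (vscale a x) (vadd (vscale b y) (vscale c z))) w
  = a * dot x w + b * dot y w + c * dot z w.
Proof. unfold dot, vadd, vscale, mkv, vx, vy, vz; simpl; ring. Qed.
Lemma dot_add2 x y a b w : dot (vadd (vscale a x) (vscale b y)) w = a * dot x w + b * dot y w.
Proof. unfold dot, vadd, vscale, mkv, vx, vy, vz; simpl; ring. Qed.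

Lemma vderiv_const (d : vec3) s : vderiv (fun _ => d) s (mkv 0 0 0).
Proof.
  unfold vderiv, mkv, vx, vy, vz; simpl; split; [|split];
  exact (@is_derive_const R_AbsRing R_NormedModule _ s).
Qed.

Lemma cont_R (f : R -> R) x : continuous f x -> continuity_pt f x.
Proof. intros H; apply continuity_pt_filterlim; exact H. Qed.

Lemma deriv_cont (f : R -> R) x l : is_derive f x l -> continuity_pt f x.
Proof. intros H. apply continuity_pt_filterlim. apply (@ex_derive_continuous R_AbsRing R_NormedModule). eexists; eauto. Qed.

Lemma comb_deriv (a1 a2 a3 x1 x2 x3 : R -> R) s da1 da2 da3 dx1 dx2 dx3 :
  is_derive a1 s da1 -> is_derive a2 s da2 -> is_derive a3 s da3 ->
  is_derive x1 s dx1 -> is_derive x2 s dx2 -> is_derive x3 s dx3 ->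
  is_derive (fun t => a1 t * x1 t + (a2 t * x2 t + a3 t * x3 t)) s
   (da1 * x1 s + a1 s * dx1 + (da2 * x2 s + a2 s * dx2 + (da3 * x3 s + a3 s * dx3))).
Proof. intros. apply dplus; [|apply dplus]; apply dmult; auto. Qed.
Lemma cp_mult (f g : R -> R) x : continuity_pt f x -> continuity_pt g x -> continuity_pt (fun t => f t * g t) x.
Proof. intros; apply (continuity_pt_mult f g); auto. Qed.
Lemma cp_plus (f g : R -> R) x : continuity_pt f x -> continuity_pt g x -> continuity_pt (fun t => f t + g t) x.
Proof. intros; apply (continuity_pt_plus f g); auto. Qed.
Lemma cp_div (f g : R -> R) x : continuity_pt f x -> continuity_pt g x -> g x <> 0 -> continuity_pt (fun t => f t / g t) x.
Proof. intros; apply (continuity_pt_div f g); auto. Qed.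
Lemma cp_sqrt (f : R -> R) x : continuity_pt f x -> 0 <= f x -> continuity_pt (fun t => sqrt (f t)) x.
Proof. intros; apply (continuity_pt_comp f sqrt); auto. apply continuity_pt_sqrt; auto. Qed.
Lemma cp_sq (f : R -> R) x : continuity_pt f x -> continuity_pt (fun t => f t ^ 2) x.
Proof. intros. apply continuity_pt_locally_ext with (f := fun t => f t * f t) (a := 1); [lra| intros; ring|]. apply cp_mult; auto. Qed.
Lemma cp_const (c : R) x : continuity_pt (fun _ => c) x.
Proof. apply continuity_pt_const. intros a b; auto. Qed.
Lemma cont_Gp (m kn tg : R->R) x: continuity_pt m x -> continuity_pt kn x -> continuity_pt tg x -> kn x <> 0 ->
 continuity_pt (fun t => m t * ((kn t ^2 + tg t ^2) * sqrt (kn t ^2 + tg t ^2)) / kn t ^2) x.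
Proof. intros. apply cp_div; [apply cp_mult; [auto|apply cp_mult;[|apply cp_sqrt]]| |].
 all: try (apply cp_plus; apply cp_sq; auto). all: try (apply cp_sq; auto). nra. apply pow_nonzero; auto. Qed.
Lemma cont_u (c : R) (kn tg : R->R) x: continuity_pt kn x -> continuity_pt tg x -> kn x <> 0 ->
 continuity_pt (fun t => c * (kn t ^2 + tg t ^2) / kn t) x.
Proof. intros. apply cp_div; auto. apply cp_mult; [apply cp_const|apply cp_plus; apply cp_sq; auto]. Qed.
Lemma dot_zero u : dot u (mkv 0 0 0) = 0.
Proof. unfold dot, mkv, vx, vy, vz; simpl; ring. Qed.
Lemma dminus (f g : R -> R) x df dg : is_derive f x df -> is_derive g x dg -> is_derive (fun t => f t - g t) x (df - dg).
Proof. intros; apply (@is_derive_minus R_AbsRing R_NormedModule); auto. Qed.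

Lemma dconst (c s : R) : is_derive (fun _ => c) s 0.
Proof. exact (@is_derive_const R_AbsRing R_NormedModule c s). Qed.

Lemma comp_zero (pr : vec3 -> R)
  (Hadd : forall x y, pr (vadd x y) = pr x + pr y) (Hsc : forall k x, pr (vscale k x) = k * pr x)
  (al be : R -> R) c (T V U : R -> vec3) (kg kn tg : R -> R) s :
  is_derive al s (kg s * be s + kn s * c) -> is_derive be s (- kg s * al s + tg s * c) ->
  kn s * al s + tg s * be s = 0 ->
  is_derive (fun t => pr (T t)) s (pr (vadd (vscale (kg s) (V s)) (vscale (kn s) (U s)))) ->
  is_derive (fun t => pr (V t)) s (pr (vadd (vscale (- kg s) (T s)) (vscale (tg s) (U s)))) ->
  is_derive (fun t => pr (U t)) s (pr (vadd (vscale (- kn s) (T s)) (vscale (- tg s) (V s)))) ->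
  is_derive (fun t => pr (vadd (vscale (al t) (T t)) (vadd (vscale (be t) (V t)) (vscale c (U t))))) s 0.
Proof.
  intros Da Db E DT DV DU.
  apply (is_derive_ext (fun t => al t * pr (T t) + (be t * pr (V t) + c * pr (U t)))).
  { intros t. rewrite Hadd, Hsc, Hadd, !Hsc. reflexivity. }
  eapply is_derive_eq.
  { apply comb_deriv; eauto. apply dconst. }
  rewrite !Hadd, !Hsc.
  match goal with |- ?x = ?y => change (@eq R x y) end.
  match goal with |- ?x = ?y => change (@eq R x y) end.
  transitivity (pr (U s) * (kn s * al s + tg s * be s)); [ring | rewrite E; ring].
Qed.

Lemma dot_ext u v w : vx v = vx w -> vy v = vy w -> vz v = vz w -> dot u v = dot u w.
Proof. intros H1 H2 H3; unfold dot; rewrite H1, H2, H3; reflexivity. Qed.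

Lemma dot_frame T V U a b c : dot T T = 1 -> dot V V = 1 -> dot U U = 1 -> dot T V = 0 ->
  dot T U = 0 -> dot V U = 0 ->
  dot (vadd (vscale a T) (vadd (vscale b V) (vscale c U))) (vadd (vscale a T) (vadd (vscale b V) (vscale c U)))
  = a^2 + b^2 + c^2.
Proof.
  intros H1 H2 H3 H4 H5 H6.
  rewrite dot_comb, (dot_sym T), (dot_sym V), (dot_sym U), !dot_comb.
  rewrite (dot_sym V T), (dot_sym U T), (dot_sym U V), H1, H2, H3, H4, H5, H6. ring.
Qed.

Theorem theorem4p2 (a b : Rbar) (gamma T V U : R -> vec3)
  (kg kn taug mu1 mu2 A : R -> R) :
  Rbar_lt a b ->
  (forall s, inI a b s -> vderiv gamma s (T s)) ->
  (forall s, inI a b s -> dot (T s) (T s) = 1) ->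
  (forall s, inI a b s -> dot (U s) (U s) = 1) ->
  (forall s, inI a b s -> dot (T s) (U s) = 0) ->
  (forall s, inI a b s -> V s = cross (U s) (T s)) ->
  (forall s, inI a b s ->
     vderiv T s (vadd (vscale (kg s) (V s)) (vscale (kn s) (U s)))) ->
  (forall s, inI a b s ->
     vderiv V s (vadd (vscale (- kg s) (T s)) (vscale (taug s) (U s)))) ->
  (forall s, inI a b s ->
     vderiv U s (vadd (vscale (- kn s) (T s)) (vscale (- taug s) (V s)))) ->
  (forall s, inI a b s -> continuous kg s /\ continuous kn s /\ continuous taug s) ->
  (forall s, inI a b s -> kn s <> 0) ->
  (forall s, inI a b s -> ex_derive mu1 s /\ ex_derive mu2 s) ->
  (forall s, inI a b s ->
     gamma s = vadd (vscale (mu1 s) (T s)) (vscale (mu2 s) (V s))) ->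
  (forall s, inI a b s -> is_derive A s (taug s * kg s / kn s)) ->
  (isophotic a b U <->
   exists c : R, forall s, inI a b s ->
     kn s ^ 2 / Rpower (kn s ^ 2 + taug s ^ 2) (3 / 2) * exp (- A s) = c).
Proof.
  intros Hab Hg HTT HUU HTU HV HdT HdV HdU Hcont Hkn Hmu Hgam HA.
  assert (HVU : forall s, inI a b s -> dot (V s) (U s) = 0).
  { intros s Hs; rewrite HV by auto; apply cross_dot_l. }
  assert (HVT : forall s, inI a b s -> dot (V s) (T s) = 0).
  { intros s Hs; rewrite HV by auto; apply cross_dot_r. }
  assert (HVV : forall s, inI a b s -> dot (V s) (V s) = 1).
  { intros s Hs; rewrite HV by auto. rewrite cross_norm, HUU, HTT by auto.
    rewrite (dot_sym (U s) (T s)), HTU by auto; ring. }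
  assert (Hp : forall s, inI a b s -> dot (gamma s) (U s) = 0).
  { intros s Hs; rewrite Hgam by auto; rewrite dot_add2, HTU, HVU by auto; ring. }
  set (q := fun t => dot (gamma t) (T t)).
  set (m := fun t => dot (gamma t) (V t)).
  assert (Dq : forall s, inI a b s -> is_derive q s (1 + kg s * m s)).
  { intros s Hs. eapply is_derive_eq. apply dot_deriv; [apply Hg|apply HdT]; auto.
    rewrite (dot_sym (gamma s) (vadd _ _)), dot_add2, HTT by auto.
    unfold m. rewrite (dot_sym (V s)), (dot_sym (U s)), Hp by auto. ring. }
  assert (Dm : forall s, inI a b s -> is_derive m s (- kg s * q s)).
  { intros s Hs. eapply is_derive_eq. apply dot_deriv; [apply Hg|apply HdV]; auto.
    rewrite (dot_sym (gamma s) (vadd _ _)), dot_add2, (dot_sym (T s) (V s)), HVT by auto.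
    unfold q. rewrite (dot_sym (T s)), (dot_sym (U s)), Hp by auto. ring. }
  assert (E1 : forall s, inI a b s -> kn s * q s + taug s * m s = 0).
  { intros s Hs.
    assert (D := dot_deriv gamma U s (T s) _ (Hg s Hs) (HdU s Hs)).
    assert (Z := deriv_zero_on a b _ 0 s _ Hp Hs D).
    rewrite (dot_sym (gamma s) (vadd _ _)), dot_add2, HTU in Z by auto.
    unfold q, m. rewrite (dot_sym (gamma s)), (dot_sym (gamma s) (V s)). lra. }
  set (C := fun t => m t * exp (- A t)).
  assert (DC : forall s, inI a b s -> is_derive C s 0).
  { intros s Hs. eapply is_derive_eq. apply dmult; [apply Dm|apply dexpneg, HA]; auto.
    assert (E := E1 s Hs). assert (K := Hkn s Hs).
    assert (Q : q s = - taug s * m s / kn s) by (field_simplify_eq; auto; lra).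
    rewrite Q. field; auto. }
  assert (Cc : forall x y, inI a b x -> inI a b y -> C x = C y).
  { intros x y Hx Hy; apply (const_on a b); auto. }
  assert (Hm : forall s, inI a b s -> m s <> 0).
  { intros x0 Hx0 Hm0.
    assert (Hz : forall t, inI a b t -> q t = 0).
    { intros t Ht. assert (Cz : C t = 0).
      { rewrite (Cc t x0) by auto. unfold C; rewrite Hm0; ring. }
      unfold C in Cz. assert (m t = 0).
      { apply Rmult_integral in Cz; destruct Cz; auto. pose proof (exp_pos (- A t)); lra. }
      assert (E := E1 t Ht). assert (K := Hkn t Ht).
      apply (Rmult_eq_reg_l (kn t)); auto. rewrite H in E. lra. }
    assert (Z := deriv_zero_on a b q 0 x0 _ Hz Hx0 (Dq x0 Hx0)).
    rewrite Hm0 in Z. lra. }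
  assert (Hs2 : forall s, inI a b s -> 0 < kn s ^2 + taug s ^2).
  { intros s Hs. assert (K := Hkn s Hs). assert (0 < kn s ^2) by (apply pow2_gt_0; auto). nra. }
  assert (HR3 : forall s, inI a b s -> Rpower (kn s ^2 + taug s ^2) (3/2)
      = (kn s ^2 + taug s ^2) * sqrt (kn s ^2 + taug s ^2)).
  { intros s Hs. replace (3/2) with (1 + /2) by field.
    rewrite Rpower_plus, Rpower_1, Rpower_sqrt; auto. }
  set (Gp := fun t => m t * ((kn t ^2 + taug t ^2) * sqrt (kn t ^2 + taug t ^2)) / kn t ^2).
  assert (Gnz : forall s, inI a b s -> Gp s <> 0).
  { intros s Hs. unfold Gp. assert (0 < sqrt (kn s ^2 + taug s ^2)) by (apply sqrt_lt_R0; auto).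
    assert (K := Hkn s Hs). assert (M := Hm s Hs). assert (S := Hs2 s Hs).
    apply Rmult_integral_contrapositive; split; [|apply Rinv_neq_0_compat, pow_nonzero; auto].
    apply Rmult_integral_contrapositive; split; auto. nra. }
  assert (FG : forall s, inI a b s ->
     kn s ^ 2 / Rpower (kn s ^ 2 + taug s ^ 2) (3 / 2) * exp (- A s) = C s / Gp s).
  { intros s Hs. rewrite HR3 by auto. unfold C, Gp.
    assert (0 < sqrt (kn s ^2 + taug s ^2)) by (apply sqrt_lt_R0; auto).
    assert (K := Hkn s Hs). assert (M := Hm s Hs). assert (S := Hs2 s Hs).
    field. repeat split; auto; lra. }
  assert (Hq : forall s, inI a b s -> q s = - taug s * m s / kn s).
  { intros s Hs. assert (E := E1 s Hs). assert (K := Hkn s Hs). field_simplify_eq; auto; lra. }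
  assert (Cm : forall s, inI a b s -> continuity_pt m s).
  { intros s Hs. eapply deriv_cont; apply Dm; auto. }
  assert (Ckn : forall s, inI a b s -> continuity_pt kn s).
  { intros s Hs. apply cont_R. apply Hcont; auto. }
  assert (Ctg : forall s, inI a b s -> continuity_pt taug s).
  { intros s Hs. apply cont_R. apply Hcont; auto. }
  split.
  - intros [d [phi [Hd1 Hdc]]].
    set (c := cos phi) in *.
    set (al := fun t => dot (T t) d). set (be := fun t => dot (V t) d).
    assert (Dal : forall s, inI a b s -> is_derive al s (kg s * be s + kn s * c)).
    { intros s Hs. eapply is_derive_eq. apply (dot_deriv T (fun _ => d)); [apply HdT; auto| apply vderiv_const].
      rewrite dot_add2, dot_zero. unfold be. rewrite Hdc by auto. ring. }
    assert (Dbe : forall s, inI a b s -> is_derive be s (- kg s * al s + taug s * c)).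
    { intros s Hs. eapply is_derive_eq. apply (dot_deriv V (fun _ => d)); [apply HdV; auto| apply vderiv_const].
      rewrite dot_add2, dot_zero. unfold al. rewrite Hdc by auto. ring. }
    assert (E2 : forall s, inI a b s -> kn s * al s + taug s * be s = 0).
    { intros s Hs.
      assert (D := dot_deriv U (fun _ => d) s _ _ (HdU s Hs) (vderiv_const d s)).
      assert (Z := deriv_zero_on a b _ c s _ Hdc Hs D).
      rewrite dot_add2, dot_zero in Z. unfold al, be. lra. }
    set (W := fun t => al t * m t - be t * q t).
    assert (W0 : forall s, inI a b s -> W s = 0).
    { intros s Hs. unfold W. assert (K := Hkn s Hs). apply (Rmult_eq_reg_l (kn s)); auto.
      assert (E := E1 s Hs). assert (E' := E2 s Hs).
      replace (kn s * (al s * m s - be s * q s)) with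
        (m s * (kn s * al s + taug s * be s) - be s * (kn s * q s + taug s * m s)) by ring.
      rewrite E, E'. ring. }
    assert (E3 : forall s, inI a b s -> be s = c * (kn s * m s - taug s * q s)).
    { intros s Hs.
      assert (D : is_derive W s ((kg s * be s + kn s * c) * m s + al s * (- kg s * q s)
                     - ((- kg s * al s + taug s * c) * q s + be s * (1 + kg s * m s)))).
      { apply dminus; apply dmult; auto. }
      assert (Z := deriv_zero_on a b W 0 s _ W0 Hs D). lra. }
    assert (Pars : forall s, inI a b s -> al s ^2 + be s ^2 + c ^2 = 1).
    { intros s Hs. assert (G := gram d (U s) (T s)).
      rewrite <- HV in G by auto. rewrite Hd1, HUU, HTT, (dot_sym (U s) (T s)), HTU in G by auto.
      rewrite (dot_sym d (U s)), Hdc, (dot_sym d (T s)) in G by auto.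
      unfold al, be. rewrite (dot_sym (V s)). lra. }
    assert (Key : forall s, inI a b s -> c ^2 * (1 + Gp s ^2) = 1).
    { intros s Hs. assert (K := Hkn s Hs). assert (S := Hs2 s Hs).
      assert (SS : sqrt (kn s ^2 + taug s ^2) * sqrt (kn s ^2 + taug s ^2) = kn s ^2 + taug s ^2)
        by (apply sqrt_sqrt; lra).
      replace (Gp s ^2) with (m s ^2 * (kn s ^2 + taug s ^2)^2 *
          (sqrt (kn s ^2 + taug s ^2) * sqrt (kn s ^2 + taug s ^2)) / kn s ^4)
        by (unfold Gp; field; auto).
      rewrite SS.
      assert (Hbe : be s = c * m s * (kn s ^2 + taug s ^2) / kn s).
      { rewrite E3, Hq by auto. field; auto. }
      assert (Hal : al s = - taug s * be s / kn s).
      { assert (E := E2 s Hs). field_simplify_eq; auto; lra. }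
      assert (P := Pars s Hs). rewrite Hal, Hbe in P.
      rewrite <- P at 2. field; auto. }
    assert (Gc : forall x y, inI a b x -> inI a b y -> Gp x = Gp y).
    { intros x y Hx Hy. apply (const_on a b); auto. intros t Ht.
      set (K2 := Gp t ^2).
      assert (K2p : 0 < K2) by (unfold K2; apply pow2_gt_0; auto).
      eapply is_derive_eq.
      apply (sign_deriv Gp (fun _ => sqrt K2) t 0).
      - apply cont_Gp; auto.
      - exact (@is_derive_const R_AbsRing R_NormedModule _ t).
      - apply Rgt_not_eq, sqrt_lt_R0; auto.
      - apply (filter_imp (inI a b)); [|apply loc_I; auto].
        intros r Hr. rewrite pow2_sqrt by lra. unfold K2.
        assert (A1 := Key r Hr). assert (A2 := Key t Ht).
        assert (c <> 0) by (intro Hc0; rewrite Hc0 in A1; lra).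
        apply (Rmult_eq_reg_l (c^2)); [|apply pow_nonzero; auto]. nra.
      - ring. }
    destruct (classic (exists x0, inI a b x0)) as [[x0 Hx0]|Hn].
    + exists (C x0 / Gp x0). intros s Hs. rewrite FG, (Cc s x0), (Gc s x0) by auto. reflexivity.
    + exists 0. intros s Hs. exfalso; eauto.
  - intros [c0 Hc0].
    destruct (classic (exists x0, inI a b x0)) as [[x0 Hx0]|Hn].
    2:{ exists (mkv 1 0 0), 0. split.
        - unfold dot, mkv, vx, vy, vz; simpl; ring.
        - intros s Hs; exfalso; eauto. }
    assert (Cnz : forall s, inI a b s -> C s <> 0).
    { intros s Hs. unfold C. apply Rmult_integral_contrapositive; split; auto.
      apply Rgt_not_eq, exp_pos. }
    set (K := C x0 / c0).
    assert (HG : forall s, inI a b s -> Gp s = K).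
    { intros s Hs. unfold K. rewrite <- (Hc0 s Hs), FG, (Cc x0 s) by auto.
      assert (G := Gnz s Hs). assert (Cs := Cnz s Hs). field; auto. }
    assert (Knz : K <> 0) by (rewrite <- (HG x0 Hx0); auto).
    assert (SQ : sqrt (1 + K^2) ^2 = 1 + K^2) by (apply pow2_sqrt; nra).
    assert (SQp : 0 < sqrt (1 + K^2)) by (apply sqrt_lt_R0; nra).
    set (c := / sqrt (1 + K^2)).
    assert (cp : 0 < c) by (unfold c; apply Rinv_0_lt_compat; auto).
    assert (c2 : c^2 * (1 + K^2) = 1).
    { unfold c. rewrite <- SQ at 2. field; lra. }
    assert (cle : c <= 1) by (assert (0 <= K^2) by nra; nra).
    assert (Gsq : forall s, inI a b s -> Gp s ^2 = m s ^2 * (kn s ^2 + taug s ^2)^3 / kn s ^4).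
    { intros s Hs. assert (Kn := Hkn s Hs). assert (S := Hs2 s Hs).
      assert (SS : sqrt (kn s ^2 + taug s ^2) * sqrt (kn s ^2 + taug s ^2) = kn s ^2 + taug s ^2)
        by (apply sqrt_sqrt; lra).
      replace (Gp s ^2) with (m s ^2 * (kn s ^2 + taug s ^2)^2 *
          (sqrt (kn s ^2 + taug s ^2) * sqrt (kn s ^2 + taug s ^2)) / kn s ^4)
        by (unfold Gp; field; auto).
      rewrite SS. field; auto. }
    set (u := fun t => c * (kn t ^2 + taug t ^2) / kn t).
    assert (Qp : forall s, inI a b s -> 0 < m s ^2 + q s ^2).
    { intros s Hs. assert (M := Hm s Hs). assert (0 < m s ^2) by (apply pow2_gt_0; auto). nra. }
    assert (Du : forall s, inI a b s -> is_derive u s (taug s * c / m s)).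
    { intros s Hs.
      assert (Qs := Qp s Hs). assert (M := Hm s Hs). assert (Kn := Hkn s Hs). assert (S := Hs2 s Hs).
      assert (SQs : 0 < sqrt (m s ^2 + q s ^2)) by (apply sqrt_lt_R0; auto).
      eapply is_derive_eq.
      apply (sign_deriv u (fun t => c * K / sqrt (m t ^2 + q t ^2)) s).
      - apply cont_u; auto.
      - apply dg; auto.
      - apply Rmult_integral_contrapositive; split; [|apply Rinv_neq_0_compat; lra].
        apply Rmult_integral_contrapositive; split; lra.
      - apply (filter_imp (inI a b)); [|apply loc_I; auto].
        intros r Hr. assert (Qr := Qp r Hr).
        assert (Mr := Hm r Hr). assert (Knr := Hkn r Hr).
        assert (SQr : 0 < sqrt (m r ^2 + q r ^2)) by (apply sqrt_lt_R0; auto).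
        replace ((c * K / sqrt (m r ^2 + q r ^2)) ^2) with
          (c^2 * K^2 / (sqrt (m r ^2 + q r ^2) ^2)) by (field; lra).
        rewrite pow2_sqrt by lra. rewrite <- (HG r Hr), Gsq by auto.
        unfold u. rewrite Hq by auto. field. split; auto.
        assert (0 < m r ^2) by (apply pow2_gt_0; auto).
        rewrite Hq in Qr by auto. intro Z. assert (0 < (m r * kn r)^2) by (apply pow2_gt_0; apply Rmult_integral_contrapositive; auto). nra.
      - assert (cn : c <> 0) by lra.
        transitivity (- u s * q s / (m s ^2 + q s ^2)).
        { field. repeat split; lra. }
        assert (0 < (m s * kn s)^2) by (apply pow2_gt_0; apply Rmult_integral_contrapositive; auto).
        unfold u. rewrite Hq in * by auto. field. repeat split; auto.
        intro Z. field_simplify in Z; auto. nra. }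
    set (al := fun t => q t * u t). set (be := fun t => u t * m t).
    assert (Dal : forall s, inI a b s -> is_derive al s (kg s * be s + kn s * c)).
    { intros s Hs. eapply is_derive_eq. apply dmult; [apply Dq|apply Du]; auto.
      assert (M := Hm s Hs). assert (Kn := Hkn s Hs).
      unfold be, u. rewrite Hq by auto. field. auto. }
    assert (Dbe : forall s, inI a b s -> is_derive be s (- kg s * al s + taug s * c)).
    { intros s Hs. eapply is_derive_eq. apply dmult; [apply Du|apply Dm]; auto.
      assert (M := Hm s Hs). unfold al. field. auto. }
    assert (E2 : forall s, inI a b s -> kn s * al s + taug s * be s = 0).
    { intros s Hs. unfold al, be. assert (E := E1 s Hs).
      replace (kn s * (q s * u s) + taug s * (u s * m s)) with (u s * (kn s * q s + taug s * m s)) by ring.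
      rewrite E; ring. }
    set (dd := fun t => vadd (vscale (al t) (T t)) (vadd (vscale (be t) (V t)) (vscale c (U t)))).
    assert (Dcomp : forall (pr : vec3 -> R), (forall x y, pr (vadd x y) = pr x + pr y) ->
              (forall k x, pr (vscale k x) = k * pr x) ->
              (forall s, inI a b s -> is_derive (fun t => pr (T t)) s (pr (vadd (vscale (kg s) (V s)) (vscale (kn s) (U s))))) ->
              (forall s, inI a b s -> is_derive (fun t => pr (V t)) s (pr (vadd (vscale (- kg s) (T s)) (vscale (taug s) (U s))))) ->
              (forall s, inI a b s -> is_derive (fun t => pr (U t)) s (pr (vadd (vscale (- kn s) (T s)) (vscale (- taug s) (V s))))) ->
              forall s, inI a b s -> pr (dd s) = pr (dd x0)).
    { intros pr Ha Hsc HT' HV' HU' s Hs. apply (const_on a b (fun t => pr (dd t))); auto.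
      intros t Ht. unfold dd. apply (comp_zero pr Ha Hsc al be c T V U kg kn taug); auto. }
    assert (Ex : forall s, inI a b s -> vx (dd s) = vx (dd x0)).
    { apply Dcomp; try reflexivity; intros s Hs; apply HdT || apply HdV || apply HdU; auto. }
    assert (Ey : forall s, inI a b s -> vy (dd s) = vy (dd x0)).
    { apply Dcomp; try reflexivity; intros s Hs; apply HdT || apply HdV || apply HdU; auto. }
    assert (Ez : forall s, inI a b s -> vz (dd s) = vz (dd x0)).
    { apply Dcomp; try reflexivity; intros s Hs; apply HdT || apply HdV || apply HdU; auto. }
    exists (dd x0), (acos c). split.
    + unfold dd. rewrite dot_frame; auto; try (rewrite (dot_sym (T x0)); auto).
      unfold al, be, u. assert (Kn := Hkn x0 Hx0). assert (M := Hm x0 Hx0).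
      assert (G := Gsq x0 Hx0). rewrite HG in G by auto.
      rewrite <- c2. rewrite Hq by auto. rewrite G. field; auto.
    + intros s Hs. rewrite cos_acos by lra.
      rewrite <- (dot_ext (U s) (dd s) (dd x0)) by auto.
      unfold dd. rewrite dot_sym, dot_comb, HUU, HTU, HVU by auto. ring.
Qed.
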